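(* Consider the constrained imperfect SIR model described in the context. Along any barrier integral curve $(S,I)$ of the MRPI set, with nonzero absolutely continuous adjoint $\lambda=(\lambda_1,\lambda_2)^T$ satisfying $\dot\lambda=\begin{pmatrix}\hat\beta(I)I & -\hat\beta(I)I\\ \alpha(I)S & -\alpha(I)S+\gamma\end{pmatrix}\lambda$, $\lambda(\bar t)=(0,1)^T$, and input $\bar\gamma(t)=\gamma_{\min}$ if $\lambda_2(t)>0$, $\gamma_{\max}$ if $\lambda_2(t)<0$ (arbitrary if $=0$), and such that its endpoint $z=(z_1,z_2)=(S(\bar t),I(\bar t))$ satisfies $z_1\neq0$ and the parameters satisfy $2\beta_{\min}>\beta_{\max}$, the input $\bar\gamma$ only switches at isolated points in time (i.e. $\lambda_2$ does not vanish identically on any nonempty open time interval).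
   Context: Imperfect SIR model: fix $0<\beta_{\min}\le\beta_{\max}$, $0<\gamma_{\min}\le\gamma_{\max}$, $I_{\max}\in(0,1]$, and the pre-designed feedback $\hat\beta(I)=\frac{\beta_{\min}-\beta_{\max}}{I_{\max}}I+\beta_{\max}$. State $x=(S,I)\in\mathbb{R}^2$; the unknown parameter is a Lebesgue measurable disturbance $\gamma:[t_0,\infty[\to[\gamma_{\min},\gamma_{\max}]$; dynamics $\dot S=-\hat\beta(I)SI$, $\dot I=\hat\beta(I)SI-\gamma I$, written $\dot x=f(x,\gamma)$, with constraint $g(x)=I-I_{\max}\le0$. Here $\alpha(I)=2\frac{\beta_{\min}-\beta_{\max}}{I_{\max}}I+\beta_{\max}$, and the displayed adjoint is $\dot\lambda=-(\partial f/\partial x)^T\lambda$; the rule for $\bar\gamma$ maximizes the Hamiltonian $\lambda^Tf$ over $\gamma$. A barrier integral curve reaches $\{I=I_{\max}\}$ tangentially at time $\bar t$ with these adjoint and input conditions, and lies in $\{0\le I\le I_{\max}\}$. *)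

(* Defs.v *)
From HB Require Import structures.
From mathcomp Require Import all_boot all_order all_algebra.
From mathcomp Require Import all_classical all_reals all_analysis.
Set Implicit Arguments. Unset Strict Implicit. Unset Printing Implicit Defensive.
Import Order.TTheory GRing.Theory Num.Theory.
Import numFieldNormedType.Exports.
Local Open Scope classical_set_scope.
Local Open Scope ring_scope.

Definition betahat (R : realType) (bmin bmax Imax I : R) : R :=
  (bmin - bmax) / Imax * I + bmax.

(* alpha(I) = 2 (bmin - bmax)/Imax * I + bmax  ( = d/dI (betahat(I) I) ) *)
Definition alphaI (R : realType) (bmin bmax Imax I : R) : R :=
  2 * (bmin - bmax) / Imax * I + bmax.

Definition abs_cont_on (R : realType) (a b : R) (f : R -> R) : Prop :=
  forall e : R, 0 < e -> exists2 d : R, 0 < d &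
    forall (n : nat) (u v : nat -> R),
      (forall k, (k < n)%N -> a <= u k /\ u k <= v k /\ v k <= b) ->
      (forall k, (k.+1 < n)%N -> v k <= u k.+1) ->
      \sum_(k < n) (v k - u k) < d ->
      \sum_(k < n) `|f (v k) - f (u k)| < e.

Definition ae_deriv_on (R : realType) (a b : R) (f g : R -> R) : Prop :=
  {ae (@lebesgue_measure R), forall t : R,
     a <= t <= b -> derivable f t 1 /\ 'D_1 f t = g t}.

(* Main.v *)
Require Import Defs.
From HB Require Import structures.
From mathcomp Require Import all_boot all_order all_algebra.
From mathcomp Require Import all_classical all_reals all_analysis.
From mathcomp Require Import ring lra.
Import Order.TTheory GRing.Theory Num.Theory.
Import numFieldNormedType.Exports.
Local Open Scope classical_set_scope.
Local Open Scope ring_scope.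
Lemma deriv_bound (R : realType) (f : R -> R) x : derivable f x 1 ->
  forall e, 0 < e -> exists2 eta, 0 < eta & forall y, `|y - x| < eta ->
    `|f y - f x - (y - x) * 'D_1 f x| <= e * `|y - x|.
Proof.
move=> H e e0.
have Hc : (fun h : R => h^-1 *: ((f \o shift x) (h *: 1) - f x)) @ 0^' --> 'D_1 f x := H.
have := @cvgr_dist_lt _ _ _ (0^') _ _ _ Hc _ e0.
move=> [eta /= eta0 Heta].
exists eta => // y yx.
have [->|yx0] := eqVneq y x.
  by rewrite !subrr mul0r subr0 normr0 mulr0.
have := Heta (y - x).
rewrite /ball /= sub0r normrN => /(_ yx).
rewrite subr_eq0 yx0 => /(_ isT).
rewrite -[(y - x)%:A]/((y-x) * 1) mulr1 subrK => Hl.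
have dn : y - x != 0 by rewrite subr_eq0.
have -> : f y - f x - (y-x) * 'D_1 f x = -((y-x) * ('D_1 f x - (y-x)^-1 * (f y - f x))).
  by field.
rewrite normrN normrM mulrC; apply: ler_wpM2r => //; exact: ltW.
Qed.
Definition Pinv {R : realType} (U : set R) (f : R -> R) (u K x : R) : Prop :=
  exists n (a b : nat -> R),
   [/\ (forall k, (k < n)%N -> u <= a k /\ a k <= b k /\ b k <= x),
       (forall k, (k.+1 < n)%N -> b k <= a k.+1),
       ((\sum_(k < n) (b k - a k))%:E <= (@lebesgue_measure R) (U `&` `]-oo, x[))%E &
       `|f x - f u| <= K * (x - u) + \sum_(k < n) `|f (b k) - f (a k)|].

Lemma Pinv_ext2 {R : realType} {U : set R} {f} {u K x y : R} :
  measurable U -> x <= y -> `|f y - f x| <= K * (y - x) ->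
  Pinv U f u K x -> Pinv U f u K y.
Proof.
move=> mU xy Hf [n [a [b [H1 H2 H3 H4]]]].
exists n, a, b; split => //.
- move=> k /H1 [? [? ?]]; do 2 split => //; exact: le_trans xy.
- apply: (le_trans H3); apply: le_measure; rewrite ?inE.
  + by apply: measurableI => //; exact: measurable_itv.
  + by apply: measurableI => //; exact: measurable_itv.
  move=> z [Uz] zx; split => //.
  move: zx; rewrite /= !in_itv /= => zx; exact: lt_le_trans xy.
- have := ler_normD (f y - f x) (f x - f u).
  rewrite addrA subrK => Htr.
  apply: (le_trans Htr).
  have -> : K * (y - u) = K * (y - x) + K * (x - u) by ring.
  rewrite -addrA; exact: lerD.
Qed.
Lemma Pinv_ext1 {R : realType} {U : set R} {f} {u K x y : R} :
  measurable U -> u <= x -> x <= y -> 0 <= K -> `[x, y[ `<=` U ->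
  Pinv U f u K x -> Pinv U f u K y.
Proof.
move=> mU ux xy K0 xyU [n [a [b [H1 H2 H3 H4]]]].
pose a' k := if k == n then x else a k.
pose b' k := if k == n then y else b k.
have sumE (F : R -> R -> R) : \sum_(k < n.+1) F (b' k) (a' k) =
    \sum_(k < n) F (b k) (a k) + F y x.
  rewrite big_ord_recr /= /a' /b' eqxx; congr (_ + _).
  by apply: eq_bigr => k _; rewrite (ltn_eqF (ltn_ord k)).
exists n.+1, a', b'; split.
- move=> k; rewrite ltnS leq_eqVlt => /orP [/eqP ->|kn].
    by rewrite /a' /b' eqxx.
  rewrite /a' /b' (ltn_eqF kn).
  have [? [? ?]] := H1 k kn; do 2 split => //; exact: le_trans xy.
- move=> k; rewrite ltnS => kn.
  rewrite /a' /b' (ltn_eqF kn).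
  case: ifP => [_|/negbT Hk]; first by have [_ [_]] := H1 k kn.
  by apply: H2; rewrite ltn_neqAle Hk kn.
- rewrite (sumE (fun p q => p - q)) EFinD.
  have mI z : measurable (U `&` `]-oo, z[) by apply: measurableI => //; exact: measurable_itv.
  have -> : (y - x)%:E = (@lebesgue_measure R) `[x, y[.
    rewrite lebesgue_measure_itv /= lte_fin; case: (ltP x y) => yx; first by rewrite -EFinD.
    by rewrite (_ : y = x) ?subrr //; apply/eqP; rewrite eq_le xy yx.
  apply: (le_trans (leeD2r _ H3)).
  rewrite -measureU //; last 2 first.
  - exact: mI.
  - apply/seteqP; split => z //= [[_]]; rewrite !in_itv /= => zx /andP [xz _].
    by move: (lt_le_trans zx xz); rewrite ltxx.
  apply: le_measure; rewrite ?inE.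
  + by apply: measurableU; [exact: mI| exact: measurable_itv].
  + exact: mI.
  move=> z [[Uz]|]; rewrite /= !in_itv /=.
    by move=> zx; split => //; exact: lt_le_trans xy.
  move=> /andP [xz zy]; split => //; apply: xyU; by rewrite /= in_itv /= xz zy.
- rewrite (sumE (fun p q => `|f p - f q|)).
  have := ler_normD (f y - f x) (f x - f u).
  rewrite addrA subrK => Htr.
  apply: (le_trans Htr).
  have -> : K * (y - u) = K * (x - u) + K * (y - x) by ring.
  have Kyx : 0 <= K * (y - x) by apply: mulr_ge0 => //; rewrite subr_ge0.
  move: H4 Kyx; set A := `|f x - f u|; set B := `|f y - f x|; set C := \sum_(k < n) _.
  move=> H4 Kyx; lra.
Qed.
Lemma open_ball_ex {R : realType} {U : set R} {s} : open U -> U s ->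
  exists2 r : R, 0 < r & forall z, `|s - z| < r -> U z.
Proof.
move=> oU Us.
have : nbhs s U by apply: open_nbhs_nbhs; split.
by move=> /nbhs_ballP [r /= r0 Hr]; exists r => // z sz; apply: Hr.
Qed.

Lemma deriv_loc {R : realType} {f : R -> R} {t L e} : derivable f t 1 ->
  `|'D_1 f t| <= L -> 0 < e -> exists2 eta, 0 < eta &
  forall y, `|y - t| < eta -> `|f y - f t| <= (L + e) * `|y - t|.
Proof.
move=> Hd HL e0; have [eta eta0 H] := @deriv_bound R f t Hd e e0.
exists eta => // y yt; have := H y yt.
have := ler_normD (f y - f t - (y - t) * 'D_1 f t) ((y - t) * 'D_1 f t).
rewrite subrK normrM => H1 H2.
have H3 : `|y - t| * `|'D_1 f t| <= L * `|y - t|.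
  by rewrite mulrC; apply: ler_wpM2r.
apply: (le_trans H1).
move: H2 H3; set p := `|_ - _ - _|; set q := `|y - t| * _; move=> H2 H3; lra.
Qed.
Lemma ML_eps (R : realType) (u v L e : R) (f : R -> R) (N : set R) :
  u <= v -> 0 <= L -> 0 < e -> measurable N -> (@lebesgue_measure R N = 0)%E ->
  abs_cont_on u v f ->
  (forall t, u <= t <= v -> ~ N t -> derivable f t 1 /\ `|'D_1 f t| <= L) ->
  `|f v - f u| <= (L + e) * (v - u) + e.
Proof.
move=> uv L0 e0 mN N0 Hac Hder.
have [d d0 Hd] := Hac e e0.
have Nfin : ((@lebesgue_measure R) N < +oo)%E by rewrite N0 ltry.
have [U [oU NU Ud]] := lebesgue_regularity_outer mN Nfin d0.
have mU : measurable U := measurable_realfun.open_measurable oU.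
have muU : ((@lebesgue_measure R) U < d%:E)%E.
  rewrite -(setDUK NU); apply: (le_lt_trans (measureU2 _ _ _)).
  - exact: mN.
  - exact: measurableD.
  by rewrite [X in (X + _)%E](_ : _ = 0%E) ?add0e.
set K := L + e.
have K0 : 0 <= K by rewrite /K addr_ge0 // ltW.
have Hloc t : u <= t <= v -> ~ U t -> exists2 eta, 0 < eta &
    forall y, `|y - t| < eta -> `|f y - f t| <= K * `|y - t|.
  move=> tuv Ut; have [Hdt HL] := Hder t tuv (fun Nt => Ut (NU _ Nt)).
  exact: deriv_loc.
pose A := [set y | u <= y <= v /\ forall z, u <= z <= y -> Pinv U f u K z].
have Pu : Pinv U f u K u.
  exists 0%N, (fun _ => 0), (fun _ => 0); split => //.
  - by rewrite big_ord0 measure_ge0.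
  - by rewrite !subrr normr0 mulr0 big_ord0 addr0.
have A0 : A u.
  split; first by rewrite lexx uv.
  by move=> z /andP [uz zu]; have -> : z = u by apply/eqP; rewrite eq_le zu uz.
have hs : has_sup A by split; [exists u | exists v => y [/andP [_ ->]]].
set s := sup A.
have ubs : forall y, A y -> y <= s by move=> y Ay; exact: sup_upper_bound.
have us : u <= s := ubs u A0.
have sv : s <= v by apply: ge_sup; [exists u | move=> y [/andP [_ ->]]].
have adh r : 0 < r -> exists2 y, A y & s - r < y by move=> r0; exact: sup_adherent.
have Ps : Pinv U f u K s.
  case: (pselect (U s)) => Us.
  - have [r r0 Hr] := open_ball_ex oU Us.
    have [y [/andP [uy yv] Py] sy] := adh r r0.
    have ys := ubs y (conj (introT andP (conj uy yv)) Py).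
    apply: (Pinv_ext1 mU uy ys K0) => //; last by apply: Py; rewrite uy lexx.
    move=> z /=; rewrite in_itv /= => /andP [yz zs]; apply: Hr.
    rewrite ger0_norm ?subr_ge0 ?ltW //; lra.
  - have [eta eta0 Heta] := Hloc s (introT andP (conj us sv)) Us.
    have [y [/andP [uy yv] Py] sy] := adh eta eta0.
    have ys := ubs y (conj (introT andP (conj uy yv)) Py).
    apply: (Pinv_ext2 mU ys); last by apply: Py; rewrite uy lexx.
    rewrite distrC -[s - y]ger0_norm ?subr_ge0 // -[`|s - y|]distrC.
    apply: Heta; rewrite distrC ger0_norm ?subr_ge0 //; lra.
have As : A s.
  split; first by rewrite us sv.
  move=> z /andP [uz zs]; have [zs'|zs'] := leP s z.
    by have -> : z = s by apply/eqP; rewrite eq_le zs zs'.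
  have [y [_ Py] sy] := adh (s - z) (ltac:(by rewrite subr_gt0)).
  by apply: Py; rewrite uz /=; apply: ltW; lra.
have sv' : s = v.
  apply/eqP; rewrite eq_le sv /=; apply/negP => /negP; rewrite -ltNge => sv2.
  suff [eta eta0 Heta] : exists2 eta, 0 < eta & forall z, s <= z -> z - s < eta -> Pinv U f u K z.
    pose y := Num.min (s + eta / 2) v.
    have sy : s < y by rewrite /y lt_min sv2 andbT ltrDl divr_gt0.
    have yv : y <= v by rewrite /y ge_min lexx orbT.
    have yeta : y - s < eta.
      have : y <= s + eta / 2 by rewrite /y ge_min lexx.
      lra.
    have Ay : A y.
      split; first by rewrite yv (le_trans us (ltW sy)).
      move=> z /andP [uz zy]; have [zs|zs] := leP z s.
        by apply: As.2; rewrite uz zs.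
      apply: Heta; [exact: ltW | lra].
    by have := ubs y Ay; rewrite leNgt sy.
  case: (pselect (U s)) => Us.
  - have [r r0 Hr] := open_ball_ex oU Us.
    exists r => // z sz zsr; apply: (Pinv_ext1 mU us sz K0) => //.
    move=> w /=; rewrite in_itv /= => /andP [sw wz]; apply: Hr.
    rewrite distrC ger0_norm ?subr_ge0 //; lra.
  - have [eta eta0 Heta] := Hloc s (introT andP (conj us sv)) Us.
    exists eta => // z sz zse; apply: (Pinv_ext2 mU sz) => //.
    have := Heta z; rewrite ger0_norm ?subr_ge0 //; apply; exact: zse.
have [n [a [b [H1 H2 H3 H4]]]] : Pinv U f u K v by rewrite -sv'.
have Hsum : \sum_(k < n) (b k - a k) < d.
  rewrite -lte_fin; apply: (le_lt_trans H3); apply: (le_lt_trans _ muU).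
  apply: le_measure; rewrite ?inE //.
  by apply: measurableI => //; exact: measurable_itv.
have := Hd n a b H1 H2 Hsum.
move: H4; set p := \sum_(k < n) _; move=> H4 Hp; lra.
Qed.
Lemma ML (R : realType) (u v L : R) (f : R -> R) (N : set R) :
  u <= v -> 0 <= L -> measurable N -> (@lebesgue_measure R N = 0)%E ->
  abs_cont_on u v f ->
  (forall t, u <= t <= v -> ~ N t -> derivable f t 1 /\ `|'D_1 f t| <= L) ->
  `|f v - f u| <= L * (v - u).
Proof.
move=> uv L0 mN N0 Hac Hder.
apply/ler_addgt0Pr => e e0.
have c0 : 0 < v - u + 1 by rewrite ltr_wpDl // subr_ge0.
have e'0 : 0 < e / (v - u + 1) by rewrite divr_gt0.
have := @ML_eps R u v L _ f N uv L0 e'0 mN N0 Hac Hder.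
have -> : (L + e / (v - u + 1)) * (v - u) + e / (v - u + 1) = L * (v - u) + e.
  by field; rewrite lt0r_neq0.
by [].
Qed.
Lemma ac_restrict {R : realType} {a b c d : R} {f : R -> R} :
  abs_cont_on a b f -> a <= c -> d <= b -> abs_cont_on c d f.
Proof.
move=> H ac db e e0; have [del del0 Hd] := H e e0; exists del => // n u v H1 H2 H3.
apply: Hd => // k kn; have [? [? ?]] := H1 k kn; split; first exact: le_trans ac _.
split => //; exact: le_trans db.
Qed.

Lemma ac_cont {R : realType} {a b : R} {f : R -> R} : abs_cont_on a b f ->
  forall e, 0 < e -> exists2 del, 0 < del & forall s t, a <= s <= b -> a <= t <= b ->
  `|t - s| < del -> `|f t - f s| < e.
Proof.
move=> H e e0; have [del del0 Hd] := H e e0; exists del => // s t /andP [as_ sb] /andP [at_ tb] ts.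
wlog st : s t as_ sb at_ tb ts / s <= t.
  move=> W; have [st|ts'] := leP s t; first exact: W.
  rewrite distrC; apply: W => //; [by rewrite distrC | exact: ltW].
have := Hd 1%N (fun _ => s) (fun _ => t).
rewrite !big_ord1; apply.
- by move=> k _; rewrite as_ st tb.
- by [].
- by move: ts; rewrite ger0_norm // subr_ge0.
Qed.

Lemma ac_cst0 {R : realType} (a b : R) : abs_cont_on a b (fun _ => 0).
Proof.
move=> e e0; exists 1 => // n u v _ _ _.
by rewrite big1 // => k _; rewrite subrr normr0.
Qed.
Lemma LS (R : realType) (c d s : R) (x1 x2 : R -> R) (N : set R) :
  c <= s -> s < d -> measurable N -> (@lebesgue_measure R N = 0)%E ->
  abs_cont_on c d x1 -> abs_cont_on c d x2 ->
  (exists K, 0 <= K /\ exists2 eta, 0 < eta & forall t, c <= t <= d -> `|t - s| < eta -> ~ N t ->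
      [/\ derivable x1 t 1, derivable x2 t 1 &
         `|'D_1 x1 t| + `|'D_1 x2 t| <= K * (`|x1 t| + `|x2 t|)]) ->
  x1 s = 0 -> x2 s = 0 ->
  exists2 h, 0 < h & s + h <= d /\ forall t, s <= t <= s + h -> x1 t = 0 /\ x2 t = 0.
Proof.
move=> cs sd mN N0 Ha1 Ha2 [K [K0 [eta eta0 HK]]] x1s x2s.
have [d1 d10 Hd1] := ac_cont Ha1 1 ltr01.
have [d2 d20 Hd2] := ac_cont Ha2 1 ltr01.
pose h := Num.min (Num.min (eta / 2) (Num.min (d1 / 2) (d2 / 2)))
                  (Num.min ((4 * K + 4)^-1) (d - s)).
have K4 : 0 < 4 * K + 4 by rewrite ltr_wpDl // mulr_ge0.
have h0 : 0 < h.
  rewrite /h !lt_min !divr_gt0 //= invr_gt0 K4 /= subr_gt0 sd //.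
have hle : [/\ h <= eta / 2, h <= d1 / 2, h <= d2 / 2, h <= (4 * K + 4)^-1 & h <= d - s].
  by rewrite /h !ge_min !lexx /= !orbT.
case: hle => he hd1 hd2 hK hds.
have Kh : 4 * (K * h) <= 1.
  have : (4 * K + 4) * h <= (4 * K + 4) * (4 * K + 4)^-1.
    by apply: ler_wpM2l; [exact: ltW | exact: hK].
  rewrite mulfV ?lt0r_neq0 // => H; lra.
have inI t : s <= t <= s + h -> c <= t <= d.
  move=> /andP [st tsh]; rewrite (le_trans cs st) /=; lra.
have bnd t : s <= t <= s + h -> `|x1 t| < 1 /\ `|x2 t| < 1.
  move=> tI; have /andP [st tsh] := tI.
  have ts : `|t - s| <= h by rewrite ger0_norm ?subr_ge0 //; lra.
  have sI : c <= s <= d by rewrite cs (ltW sd).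
  split.
  - have := Hd1 s t sI (inI t tI); rewrite x1s subr0; apply; lra.
  - have := Hd2 s t sI (inI t tI); rewrite x2s subr0; apply; lra.
pose Mset := [set m | exists2 t, s <= t <= s + h & m = `|x1 t| + `|x2 t|].
have sI' : s <= s <= s + h by rewrite lexx /= lerDl ltW.
have hsM : has_sup Mset.
  split; first by exists (`|x1 s| + `|x2 s|), s.
  exists 2 => m [t tI ->]; have [b1 b2] := bnd t tI; lra.
set M := sup Mset.
have HM t : s <= t <= s + h -> `|x1 t| + `|x2 t| <= M.
  by move=> tI; apply: sup_upper_bound => //; exists t.
have M0 : 0 <= M by have := HM s sI'; rewrite x1s x2s normr0 addr0.
have KM0 : 0 <= K * M by exact: mulr_ge0.
have key t : s <= t <= s + h -> `|x1 t| <= K * M * h /\ `|x2 t| <= K * M * h.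
  move=> tI; have /andP [st tsh] := tI.
  have Hder t' : s <= t' <= t -> ~ N t' ->
      [/\ derivable x1 t' 1, derivable x2 t' 1 & `|'D_1 x1 t'| + `|'D_1 x2 t'| <= K * M].
    move=> /andP [st' t't] Nt'.
    have t'I : s <= t' <= s + h by rewrite st' /= (le_trans t't tsh).
    have [D1 D2 HD] := HK t' (inI t' t'I) (ltac:(rewrite ger0_norm ?subr_ge0 //; lra)) Nt'.
    split => //; apply: (le_trans HD); apply: ler_wpM2l => //; exact: HM.
  have Ht : K * M * (t - s) <= K * M * h by apply: ler_wpM2l => //; lra.
  have [_ tdd] := andP (inI t tI).
  split.
  - have := @ML R s t (K * M) x1 N st KM0 mN N0 (ac_restrict Ha1 cs tdd).
    rewrite x1s subr0 => H; apply: (le_trans (H _)) => // t' t'I Nt'.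
    have [D1 D2 HD] := Hder t' t'I Nt'; split => //.
    apply: le_trans HD; rewrite lerDl; exact: normr_ge0.
  - have := @ML R s t (K * M) x2 N st KM0 mN N0 (ac_restrict Ha2 cs tdd).
    rewrite x2s subr0 => H; apply: (le_trans (H _)) => // t' t'I Nt'.
    have [D1 D2 HD] := Hder t' t'I Nt'; split => //.
    apply: le_trans HD; rewrite lerDr; exact: normr_ge0.
have MM : M <= M / 2.
  apply: ge_sup; first by exists (`|x1 s| + `|x2 s|), s.
  move=> m [t tI ->]; have [k1 k2] := key t tI.
  have H : (4 * (K * h)) * M <= 1 * M by apply: ler_wpM2r.
  have E : K * M * h = (K * h) * M by ring.
  have E2 : 4 * (K * h) * M = 4 * ((K * h) * M) by ring.
  rewrite E in k1 k2; rewrite E2 in H.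
  move: k1 k2 H; set p := K * h * M; move=> k1 k2 H; lra.
have M00 : M = 0 by apply/eqP; rewrite eq_le M0 andbT; lra.
exists h => //; split; first lra.
move=> t tI; have := HM t tI; rewrite M00 => H.
have n1 := normr_ge0 (x1 t); have n2 := normr_ge0 (x2 t).
by split; apply/normr0_eq0/eqP; rewrite eq_le normr_ge0 andbT; lra.
Qed.
Lemma UNIQ (R : realType) (c d : R) (x1 x2 : R -> R) (N : set R) :
  c <= d -> measurable N -> (@lebesgue_measure R N = 0)%E ->
  abs_cont_on c d x1 -> abs_cont_on c d x2 ->
  (forall s, c <= s <= d -> exists K, 0 <= K /\ exists2 eta, 0 < eta &
     forall t, c <= t <= d -> `|t - s| < eta -> ~ N t ->
      [/\ derivable x1 t 1, derivable x2 t 1 &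
         `|'D_1 x1 t| + `|'D_1 x2 t| <= K * (`|x1 t| + `|x2 t|)]) ->
  x1 c = 0 -> x2 c = 0 -> x1 d = 0 /\ x2 d = 0.
Proof.
move=> cd mN N0 Ha1 Ha2 HK x1c x2c.
pose B := [set y | c <= y <= d /\ forall z, c <= z <= y -> x1 z = 0 /\ x2 z = 0].
have B0 : B c.
  split; first by rewrite lexx cd.
  by move=> z /andP [cz zc]; have -> : z = c by apply/eqP; rewrite eq_le zc cz.
have hs : has_sup B by split; [exists c | exists d => y [/andP [_ ->]]].
set s := sup B.
have ubs : forall y, B y -> y <= s by move=> y By; exact: sup_upper_bound.
have cs : c <= s := ubs c B0.
have sd : s <= d by apply: ge_sup; [exists c | move=> y [/andP [_ ->]]].
have adh r : 0 < r -> exists2 y, B y & s - r < y by move=> r0; exact: sup_adherent.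
have sI : c <= s <= d by rewrite cs sd.
have zero_of (x : R -> R) : abs_cont_on c d x -> (forall y, B y -> x y = 0) -> x s = 0.
  move=> Ha Hx; apply/normr0_eq0/eqP; rewrite eq_le normr_ge0 andbT.
  apply/ler_addgt0Pr => e e0; rewrite add0r.
  have [del del0 Hd] := ac_cont Ha e e0.
  have [y By sy] := adh del del0.
  have ys := ubs y By; have [/andP [cy yd] _] := By.
  have := Hd y s (introT andP (conj cy yd)) sI.
  rewrite (Hx y By) subr0 => H; apply: ltW; apply: H.
  rewrite ger0_norm ?subr_ge0 //; lra.
have x1s : x1 s = 0 by apply: zero_of => // y [/andP [cy _] Hy]; exact: (Hy y (introT andP (conj cy (lexx y)))).1.
have x2s : x2 s = 0 by apply: zero_of => // y [/andP [cy _] Hy]; exact: (Hy y (introT andP (conj cy (lexx y)))).2.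
have Bs : B s.
  split => // z /andP [cz zs]; have [zs'|zs'] := leP s z.
    by have -> : z = s by apply/eqP; rewrite eq_le zs zs'.
  have [y [_ Hy] sy] := adh (s - z) (ltac:(by rewrite subr_gt0)).
  by apply: Hy; rewrite cz /=; apply: ltW; lra.
have sd' : s = d.
  apply/eqP; rewrite eq_le sd /=; apply/negP => /negP; rewrite -ltNge => sd2.
  have [h h0 [shd Hh]] := @LS R c d s x1 x2 N cs sd2 mN N0 Ha1 Ha2 (HK s sI) x1s x2s.
  have Bh : B (s + h).
    split; first by rewrite shd andbT (le_trans cs) // lerDl ltW.
    move=> z /andP [cz zsh]; have [zs|zs] := leP z s.
      by apply: Bs.2; rewrite cz zs.
    by apply: Hh; rewrite zsh andbT ltW.
  by have := ubs _ Bh; rewrite gerDl leNgt h0.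
by rewrite -sd'.
Qed.
Lemma ae_ex {R : realType} {a b : R} {f g : R -> R} : ae_deriv_on a b f g ->
  exists N : set R, [/\ measurable N, (@lebesgue_measure R N = 0)%E &
    forall t, ~ N t -> a <= t <= b -> derivable f t 1 /\ 'D_1 f t = g t].
Proof.
move=> [N [mN N0 sub]]; exists N; split => // t Nt abt.
apply: contrapT => H; apply: Nt; apply: sub => /= H2; apply: H; exact: H2.
Qed.

Lemma nullU {R : realType} {A B : set R} : measurable A -> measurable B ->
  (@lebesgue_measure R A = 0)%E -> (@lebesgue_measure R B = 0)%E ->
  measurable (A `|` B) /\ (@lebesgue_measure R (A `|` B) = 0)%E.
Proof.
move=> mA mB A0 B0; split; first exact: measurableU.
apply/eqP; rewrite eq_le measure_ge0 andbT.
apply: (le_trans (measureU2 _ _ _)); [exact: mA | exact: mB |].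
by rewrite [X in (X + _)%E](_ : _ = 0%E) // [X in (_ + X)%E](_ : _ = 0%E) // adde0.
Qed.

Lemma D_cst0 {R : realType} (t : R) : derivable (fun _ : R => (0 : R)) t 1 /\ 'D_1 (fun _ : R => (0:R)) t = 0.
Proof.
split; [exact: derivable_cst | exact: derive_cst].
Qed.
Theorem proposition7 (R : realType)
  (bmin bmax gmin gmax Imax : R)
  (t0 tbar : R) (S I l1 l2 gbar : R -> R) :
  (* standing assumptions on the parameters *)
  0 < bmin -> bmin <= bmax -> 0 < gmin -> gmin <= gmax ->
  0 < Imax -> Imax <= 1 ->
  t0 < tbar ->
  (* the input gbar : [t0, +oo[ -> [gmin, gmax] is Lebesgue measurable *)
  measurable_fun `[t0, +oo[ gbar ->
  (forall t, t0 <= t -> gmin <= gbar t <= gmax) ->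
  (* (S, I) is an absolutely continuous solution of the SIR dynamics with input gbar *)
  abs_cont_on t0 tbar S -> abs_cont_on t0 tbar I ->
  ae_deriv_on t0 tbar S
    (fun t => - betahat bmin bmax Imax (I t) * S t * I t) ->
  ae_deriv_on t0 tbar I
    (fun t => betahat bmin bmax Imax (I t) * S t * I t - gbar t * I t) ->
  (* the curve lies in { 0 <= I <= Imax } *)
  (forall t, t0 <= t <= tbar -> 0 <= I t <= Imax) ->
  (* it reaches { I = Imax } at time tbar, tangentially:
     max_{gamma in [gmin,gmax]} (dg/dx) f(z, gamma) = 0 *)
  I tbar = Imax ->
  (forall g, gmin <= g <= gmax ->
     betahat bmin bmax Imax (I tbar) * S tbar * I tbar - g * I tbar <= 0) ->
  (exists2 g, gmin <= g <= gmax &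
     betahat bmin bmax Imax (I tbar) * S tbar * I tbar - g * I tbar = 0) ->
  (* nonzero absolutely continuous adjoint satisfying the adjoint equation *)
  abs_cont_on t0 tbar l1 -> abs_cont_on t0 tbar l2 ->
  (exists2 t, t0 <= t <= tbar & (l1 t, l2 t) <> (0, 0)) ->
  ae_deriv_on t0 tbar l1
    (fun t => betahat bmin bmax Imax (I t) * I t * l1 t
              - betahat bmin bmax Imax (I t) * I t * l2 t) ->
  ae_deriv_on t0 tbar l2
    (fun t => alphaI bmin bmax Imax (I t) * S t * l1 t
              + (- alphaI bmin bmax Imax (I t) * S t + gbar t) * l2 t) ->
  l1 tbar = 0 -> l2 tbar = 1 ->
  (* Hamiltonian-maximizing input rule *)
  (forall t, t0 <= t <= tbar -> 0 < l2 t -> gbar t = gmin) ->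
  (forall t, t0 <= t <= tbar -> l2 t < 0 -> gbar t = gmax) ->
  (* extra hypotheses of the proposition *)
  S tbar != 0 ->
  bmax < 2 * bmin ->
  (* conclusion: l2 does not vanish identically on any nonempty open
     subinterval of the time domain, so gbar switches only at isolated times *)
  forall a b, t0 <= a -> a < b -> b <= tbar ->
    ~ (forall t, a < t < b -> l2 t = 0).
Proof.
move=> bmin0 bminmax gmin0 gminmax Imax0 Imax1 t0tbar gmeas gbnd acS acI dS dI Ibnd
  Itbar tang1 tang2 acl1 acl2 nonzero dl1 dl2 l1tbar l2tbar ruleP ruleN Stbar b2
  a b t0a ab btbar Hzero.
have [NS [mNS NS0 HS]] := ae_ex dS.
have [N1 [mN1 N10 H1]] := ae_ex dl1.
have [N2 [mN2 N20 H2]] := ae_ex dl2.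
have [mN12 N120] := nullU mN1 mN2 N10 N20.
have [mN N0] := nullU mNS mN12 NS0 N120.
set N := NS `|` (N1 `|` N2).
have HSN t : ~ N t -> t0 <= t <= tbar -> derivable S t 1 /\ 'D_1 S t = - betahat bmin bmax Imax (I t) * S t * I t.
  by move=> Nt; apply: HS => Ht; apply: Nt; left.
have H1N t : ~ N t -> t0 <= t <= tbar -> derivable l1 t 1 /\ 'D_1 l1 t =
   betahat bmin bmax Imax (I t) * I t * l1 t - betahat bmin bmax Imax (I t) * I t * l2 t.
  by move=> Nt; apply: H1 => Ht; apply: Nt; right; left.
have H2N t : ~ N t -> t0 <= t <= tbar -> derivable l2 t 1 /\ 'D_1 l2 t =
   alphaI bmin bmax Imax (I t) * S t * l1 t + (- alphaI bmin bmax Imax (I t) * S t + gbar t) * l2 t.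
  by move=> Nt; apply: H2 => Ht; apply: Nt; right; right.
have q_bnd t : t0 <= t <= tbar -> 0 <= I t / Imax <= 1 /\ 0 <= I t <= 1.
  move=> /Ibnd /andP [I0 IM]; split; last by rewrite I0 (le_trans IM Imax1).
  apply/andP; split; first by rewrite divr_ge0 // ltW.
  by rewrite ler_pdivrMr // mul1r.
have bhat_bnd t : t0 <= t <= tbar -> 0 <= betahat bmin bmax Imax (I t) * I t <= bmax.
  move=> /q_bnd [/andP [q0 q1] /andP [I0 I1]].
  have -> : betahat bmin bmax Imax (I t) = bmax - (bmax - bmin) * (I t / Imax).
    by rewrite /betahat; ring.
  move: q0 q1; set q := I t / Imax => q0 q1.
  have Bl : bmin <= bmax - (bmax - bmin) * q by nra.
  have Bu : bmax - (bmax - bmin) * q <= bmax by nra.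
  apply/andP; split; first by apply: mulr_ge0 => //; lra.
  by rewrite -[X in _ <= X]mulr1; apply: ler_pM => //; lra.
have alpha_bnd t : t0 <= t <= tbar -> 0 < alphaI bmin bmax Imax (I t) <= bmax.
  move=> /q_bnd [/andP [q0 q1] /andP [I0 I1]].
  have -> : alphaI bmin bmax Imax (I t) = bmax - 2 * (bmax - bmin) * (I t / Imax).
    by rewrite /alphaI; ring.
  move: q0 q1; set q := I t / Imax => q0 q1.
  apply/andP; split; nra.
have g_bnd t : t0 <= t -> `|gbar t| <= gmax.
  move=> /gbnd /andP [g1 g2]; rewrite ger0_norm //; lra.
have bmax0 : 0 <= bmax by lra.
have Snz c : t0 <= c <= tbar -> S c != 0.
  move=> /andP [t0c ctbar]; apply/negP => /eqP Sc.
  have [HS' _] : S tbar = 0 /\ (fun _ : R => (0:R)) tbar = 0.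
    apply: (@UNIQ R c tbar S (fun _ => 0) N ctbar mN N0
      (ac_restrict acS t0c (lexx tbar)) (ac_cst0 c tbar)) => //.
    move=> s _; exists bmax; split => //; exists 1 => // t /andP [ct ttb] _ Nt.
    have tI : t0 <= t <= tbar by rewrite (le_trans t0c ct) ttb.
    have [dS' eS] := HSN t Nt tI; have [dc ec] := D_cst0 t.
    split => //; rewrite eS ec normr0 !addr0.
    rewrite (_ : - betahat bmin bmax Imax (I t) * S t * I t =
                 - ((betahat bmin bmax Imax (I t) * I t) * S t)); last by ring.
    have /andP [B0 B1] := bhat_bnd t tI.
    by rewrite normrN normrM ger0_norm //; apply: ler_wpM2r.
  by move: Stbar; rewrite HS' eqxx.
have [c /andP [ac cb] Nc] : exists2 c, a < c < b & ~ N c.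
  apply: contrapT => H.
  have sub : `]a, b[ `<=` N.
    move=> z /=; rewrite in_itv /= => zab; apply: contrapT => Nz; apply: H; by exists z.
  have Hle : ((@lebesgue_measure R) `]a, b[ <= (@lebesgue_measure R) N)%E.
    by apply: le_measure; rewrite ?inE //; exact: measurable_itv.
  move: Hle; rewrite N0 lebesgue_measure_itv /= lte_fin ab -EFinD lee_fin.
  by rewrite subr_le0 leNgt ab.
have cI : t0 <= c <= tbar by rewrite (le_trans t0a (ltW ac)) (le_trans (ltW cb) btbar).
have [dl2c el2c] := H2N c Nc cI.
have l2c : l2 c = 0 by apply: Hzero; rewrite ac cb.
have Dl2c : 'D_1 l2 c = 0.
  have Hn : \forall t \near c, l2 t = (fun _ : R => (0:R)) t.
    apply/nbhs_ballP; exists (Num.min (c - a) (b - c)) => /=.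
      by rewrite lt_min !subr_gt0 ac cb.
    move=> t; rewrite /ball /= lt_min ltr_norml ltr_norml => /andP [/andP [h1 h2] /andP [h3 h4]].
    apply: Hzero; apply/andP; split; lra.
  by rewrite (near_eq_derive (1:R) Hn) (D_cst0 c).2.
have l1c : l1 c = 0.
  move: el2c; rewrite Dl2c l2c mulr0 addr0 => /esym /eqP.
  rewrite !mulf_eq0 => /orP [/orP [/eqP Ha|/eqP Hs]|/eqP //].
  - by have := (alpha_bnd c cI); rewrite Ha ltxx.
  - by move: (Snz c cI); rewrite Hs eqxx.
have ctbar : c <= tbar by case/andP: cI.
have t0c : t0 <= c by case/andP: cI.
have [HL1 HL2] : l1 tbar = 0 /\ l2 tbar = 0.
  apply: (@UNIQ R c tbar l1 l2 N ctbar mN N0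
    (ac_restrict acl1 t0c (lexx tbar)) (ac_restrict acl2 t0c (lexx tbar))) => //.
  move=> s /andP [cs stb].
  have sI : t0 <= s <= tbar by rewrite (le_trans t0c cs) stb.
  have [del del0 Hd] := ac_cont acS 1 ltr01.
  set B := `|S s| + 1.
  have B0 : 0 <= B by rewrite /B addr_ge0.
  have gmax0 : 0 <= gmax by lra.
  exists (bmax + bmax * B + gmax); split.
    by rewrite !addr_ge0 // mulr_ge0.
  exists del => // t /andP [ct ttb] ts Nt.
  have tI : t0 <= t <= tbar by rewrite (le_trans t0c ct) ttb.
  have [d1 e1] := H1N t Nt tI; have [d2 e2] := H2N t Nt tI.
  split => //.
  have SB : `|S t| <= B.
    have := Hd s t sI tI ts.
    have := ler_normD (S s) (S t - S s); rewrite addrC subrK /B => h1 h2; lra.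
  set X := `|l1 t| + `|l2 t|.
  have X12 : `|l1 t - l2 t| <= X by exact: ler_normB.
  have Xn : 0 <= `|l1 t - l2 t| by exact: normr_ge0.
  have [Bb0 Bb1] := andP (bhat_bnd t tI).
  have [Al0 Al1] := andP (alpha_bnd t tI).
  have E1 : 'D_1 l1 t = (betahat bmin bmax Imax (I t) * I t) * (l1 t - l2 t).
    by rewrite e1; ring.
  have E2 : 'D_1 l2 t = (alphaI bmin bmax Imax (I t) * S t) * (l1 t - l2 t) + gbar t * l2 t.
    by rewrite e2; ring.
  have F1 : `|'D_1 l1 t| <= bmax * X.
    rewrite E1 normrM ger0_norm //; apply: ler_pM => //.
  have AS : `|alphaI bmin bmax Imax (I t) * S t| <= bmax * B.
    rewrite normrM (ger0_norm (ltW Al0)); apply: ler_pM => //; exact: ltW.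
  have F2 : `|'D_1 l2 t| <= bmax * B * X + gmax * X.
    rewrite E2; apply: (le_trans (ler_normD _ _)); apply: lerD.
      rewrite normrM; apply: ler_pM => //.
    rewrite normrM; apply: ler_pM => //; first exact: g_bnd (le_trans t0c ct).
    by rewrite /X lerDr.
  move: F1 F2; set P := `|'D_1 l1 t|; set Q := `|'D_1 l2 t| => F1 F2.
  have -> : (bmax + bmax * B + gmax) * X = bmax * X + bmax * B * X + gmax * X by ring.
  lra.
by move: l2tbar; rewrite HL2 => /eqP; rewrite eq_sym oner_eq0.
Qed.
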